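(* Let $v$ be an equilibrium in the interior of $\Delta$ (all coordinates positive) which is different from the center $(1/N,\dots,1/N)$. Then the set $\{v_i: i\le N\}$ has exactly two elements.
   Context: Let $N\ge3$, $\alpha>1$, and $A_{i,j}=1-\delta_{i,j}$ for $i,j\le N$. Let $\Delta=\{v\in\mathbb R_+^N:\sum_iv_i=1,\ v_i\le3/4\ \forall i\}$. For $v\in\Delta$ let $v^\alpha=(v_i^\alpha)_i$, $H(v)=\sum_{i\neq j}v_i^\alpha v_j^\alpha$, $\pi_i(v)=v_i^\alpha(Av^\alpha)_i/H(v)$, and $F(v)=-v+\pi(v)$. An equilibrium is $v\in\Delta$ with $F(v)=0$. *)

(* Defs.v *)
From mathcomp Require Import all_boot all_order all_algebra.
From mathcomp Require Import all_classical all_reals all_analysis.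
Set Implicit Arguments. Unset Strict Implicit. Unset Printing Implicit Defensive.
Import Order.TTheory GRing.Theory Num.Theory.
Local Open Scope ring_scope.

Section Defs.
Variables (R : realType) (N : nat) (alpha : R).

Definition Amat : 'M[R]_N := \matrix_(i, j) (1 - (i == j)%:R).

Definition inDelta (v : 'I_N -> R) : Prop :=
  (\sum_i v i = 1) /\ (forall i, 0 <= v i /\ v i <= 3 / 4).

Definition vpow (v : 'I_N -> R) (i : 'I_N) : R := v i `^ alpha.

Definition Avpow (v : 'I_N -> R) (i : 'I_N) : R :=
  \sum_j Amat i j * vpow v j.

Definition Hfun (v : 'I_N -> R) : R :=
  \sum_i \sum_(j | j != i) vpow v i * vpow v j.

Definition pifun (v : 'I_N -> R) (i : 'I_N) : R :=
  vpow v i * Avpow v i / Hfun v.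

Definition Ffun (v : 'I_N -> R) (i : 'I_N) : R := - v i + pifun v i.

Definition equilibrium (v : 'I_N -> R) : Prop :=
  inDelta v /\ (forall i, Ffun v i = 0).

Definition simplex_center : 'I_N -> R := fun _ => 1 / N%:R.

End Defs.
Arguments simplex_center {R N} _.

(* Main.v *)
Require Import Defs.
From mathcomp Require Import all_boot all_order all_algebra.
From mathcomp Require Import all_classical all_reals all_analysis.
From mathcomp Require Import ring lra.
Import Order.TTheory GRing.Theory Num.Theory.
Local Open Scope ring_scope.
Section S.
Context {R : realType}.
Definition psi (al H x : R) := x `^ al + H * x `^ (1 - al).
Definition dpsi (al H x : R) := al * x `^ (al - 1) + H * ((1 - al) * x `^ (1 - al - 1)).
Lemma psi_der (al H x : R) : 0 < x ->
  is_derive x 1 (psi al H) (dpsi al H x).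
Proof.
move=> x0.
exact: (is_deriveD (is_derive1_powR al x0) (is_deriveZ H (is_derive1_powR (1-al) x0))).
Qed.

Lemma dpsi_lt (al H x y : R) : 1 < al -> 0 < H -> 0 < x -> x < y ->
  dpsi al H x < dpsi al H y.
Proof.
move=> al1 H0 x0 xy.
have y0 : 0 < y by apply: lt_trans xy.
rewrite /dpsi (_ : 1 - al - 1 = - al); last by ring.
rewrite !powRN.
have r12 : x `^ (al - 1) < y `^ (al - 1).
  by apply: gt0_ltr_powR; rewrite ?subr_gt0 // nnegrE ltW.
have p12 : x `^ al < y `^ al.
  by apply: gt0_ltr_powR; rewrite ?(lt_trans _ al1) // nnegrE ltW.
have px : 0 < x `^ al by apply: powR_gt0.
have q12 : (y `^ al)^-1 < (x `^ al)^-1.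
  by rewrite ltf_pV2 // ?posrE ?powR_gt0.
rewrite -subr_gt0.
set r1 := x `^ (al - 1) in r12 *; set r2 := y `^ (al - 1) in r12 *.
set q1 := (x `^ al)^-1 in q12 *; set q2 := (y `^ al)^-1 in q12 *.
have -> : al * r2 + H * ((1 - al) * q2) - (al * r1 + H * ((1 - al) * q1))
   = al * (r2 - r1) + H * ((al - 1) * (q1 - q2)) by ring.
apply: addr_gt0; apply: mulr_gt0; rewrite ?subr_gt0 ?(lt_trans _ al1) //.
by apply: mulr_gt0; rewrite subr_gt0.
Qed.

Lemma psi_mvt (al H a b : R) : 0 < a -> a < b -> psi al H a = psi al H b ->
  exists2 c, c \in `]a, b[%R & dpsi al H c = 0.
Proof.
move=> a0 ab e.
have dd : forall x, x \in `]a, b[%R -> is_derive x 1 (psi al H) (dpsi al H x).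
  by move=> x; rewrite in_itv /= => /andP[ax _]; apply: psi_der; apply: lt_trans ax.
have [|c cab D] := MVT ab dd.
  apply: derivable_within_continuous => x.
  rewrite in_itv /= => /andP [ax _].
  by case: (psi_der al H x (lt_le_trans a0 ax)).
exists c => //.
move: D; rewrite e subrr => /esym /eqP; rewrite mulf_eq0 subr_eq0 (gt_eqF ab) orbF.
by move/eqP.
Qed.

Lemma psi3 (al H a b c : R) : 1 < al -> 0 < H -> 0 < a -> a < b -> b < c ->
  psi al H a = psi al H b -> psi al H b = psi al H c -> False.
Proof.
move=> al1 H0 a0 ab bc e1 e2.
have [c1] := psi_mvt _ _ _ _ a0 ab e1; rewrite in_itv /= => /andP[ac1 c1b] d1.
have [c2] := psi_mvt _ _ _ _ (lt_trans a0 ab) bc e2; rewrite in_itv /= => /andP[bc2 _] d2.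
have := dpsi_lt _ _ _ _ al1 H0 (lt_trans a0 ac1) (lt_trans c1b bc2).
by rewrite d1 d2 ltxx.
Qed.
End S.

Theorem lemma4p3 (R : realType) (N : nat) (alpha : R) (v : 'I_N -> R) :
  (3 <= N)%N -> 1 < alpha ->
  equilibrium alpha v ->
  (forall i, 0 < v i) ->
  v <> simplex_center ->
  size (undup [seq v i | i <- enum 'I_N]) = 2%N.
Proof.
move=> N3 al1 [[Hsum Hrng] HF] vpos vnc.
set S := \sum_j vpow alpha v j.
have Aeq i : Avpow alpha v i = S - vpow alpha v i.
  rewrite /Avpow /Amat.
  under eq_bigr => j _ do rewrite mxE mulrBl mul1r.
  rewrite sumrB; congr (_ - _); rewrite (bigD1 i) //= eqxx mul1r big1 ?addr0 //.
  by move=> j; rewrite eq_sym => /negbTE ->; rewrite mul0r.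
have vp0 i : 0 < vpow alpha v i by apply: powR_gt0.
have A0 i : 0 <= Avpow alpha v i.
  apply: sumr_ge0 => j _; rewrite mxE; apply: mulr_ge0; last exact: powR_ge0.
  by case: (i == j); rewrite /= ?subrr ?subr0.
have Heq i : v i = vpow alpha v i * Avpow alpha v i / Hfun alpha v.
  by move/eqP: (HF i); rewrite /Ffun /pifun addrC subr_eq0 => /eqP ->.
have N0 : (0 < N)%N by apply: leq_trans N3.
pose i0 : 'I_N := Ordinal N0.
set H := Hfun alpha v in Heq.
have H0 : 0 < H.
  rewrite ltNge; apply/negP => Hle.
  have := vpos i0; rewrite Heq ltNge => /negP; apply.
  by apply: mulr_ge0_le0; [apply: mulr_ge0; [exact: ltW|]|rewrite invr_le0].
have psiS i : psi alpha H (v i) = S.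
  have := Heq i; rewrite Aeq /vpow /psi.
  have vi0 := vpos i.
  have P0 := vp0 i; rewrite /vpow in P0.
  set P := v i `^ alpha in P0 *.
  move=> E.
  rewrite powRB; last by rewrite (gt_eqF vi0) implybT.
  rewrite powRr1; last exact: ltW.
  rewrite -/P.
  have -> : H * (v i / P) = S - P.
    rewrite E; field.
    by rewrite !gt_eqF.
  ring.
set s := undup _.
have sP x : x \in s -> 0 < x /\ psi alpha H x = S.
  by rewrite mem_undup => /mapP [i _ ->].
have vs i : v i \in s by rewrite mem_undup; apply: map_f; rewrite mem_enum.
have K x y z : x \in s -> y \in s -> z \in s -> x < y -> y < z -> False.
  move=> /sP [x0 ex] /sP [_ ey] /sP [_ ez] xy yz.
  by apply: (psi3 _ _ _ _ _ al1 H0 x0 xy yz); rewrite ?ex ?ey ?ez.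
have us : uniq s := undup_uniq _.
case Es : s us => [|x [|y [|z t]]] us.
- by have := vs i0; rewrite Es.
- exfalso; apply: vnc; apply: funext => i.
  have : v i \in s := vs i; rewrite Es inE => /eqP vix.
  have allx j : v j = x by have := vs j; rewrite Es inE => /eqP.
  move: Hsum; under eq_bigr => j _ do rewrite allx.
  rewrite sumr_const card_ord => Hx.
  have NR : (N%:R : R) != 0 by rewrite pnatr_eq0 -lt0n.
  rewrite /simplex_center vix; apply: (mulfI NR).
  by rewrite [LHS]mulrC mulr_natr Hx mul1r divff.
- by [].
- exfalso.
  have hx : x \in s by rewrite Es !inE eqxx.
  have hy : y \in s by rewrite Es !inE eqxx orbT.
  have hz : z \in s by rewrite Es !inE eqxx !orbT.
  move: us; rewrite /= !inE !negb_or => /andP[/andP[nxy /andP[nxz _]] /andP[/andP[nyz _] _]].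
  have [xy|yx|e] := ltgtP x y; last by rewrite e eqxx in nxy.
  + have [yz|zy|e] := ltgtP y z; last by rewrite e eqxx in nyz.
    * exact: K hx hy hz xy yz.
    * have [xz|zx|e] := ltgtP x z; last by rewrite e eqxx in nxz.
      - exact: K hx hz hy xz zy.
      - exact: K hz hx hy zx xy.
  + have [yz|zy|e] := ltgtP y z; last by rewrite e eqxx in nyz.
    * have [xz|zx|e] := ltgtP x z; last by rewrite e eqxx in nxz.
      - exact: K hy hx hz yx xz.
      - exact: K hy hz hx yz zx.
    * exact: K hz hy hx zy yx.
Qed.
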